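(* For every integer $n\ge 4$ there exist $n$ pairwise distinct parallel lines in the plane such that there is no regular $n$-gon whose $n$ vertices lie one on each of these lines. *)

(* Defs.v *)
From Stdlib Require Export Reals.
Open Scope R_scope.

(* The line { p | a * p.1 + b * p.2 = c } (a line provided (a,b) <> (0,0)). *)
Definition on_line (a b c : R) (p : R * R) : Prop := a * fst p + b * snd p = c.

Definition regular_polygon (n : nat) (P : nat -> R * R) : Prop :=
  exists (cx cy r th : R), 0 < r /\
    forall k : nat, (k < n)%nat ->
      P k = (cx + r * cos (th + 2 * PI * INR k / INR n),
             cy + r * sin (th + 2 * PI * INR k / INR n)).

(* Main.v *)
Require Import Defs.
From Stdlib Require Import Reals Lra Lia List Permutation.
Open Scope R_scope.

Definition lsum (l : list R) : R := fold_right Rplus 0 l.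

Lemma lsum_app l1 l2 : lsum (l1 ++ l2) = lsum l1 + lsum l2.
Proof. induction l1; simpl; [ring | rewrite IHl1; ring]. Qed.

Lemma lsum_perm l l' : Permutation l l' -> lsum l = lsum l'.
Proof. induction 1; simpl; lra. Qed.

Lemma lsum_lin (f g : nat -> R) a b l :
  lsum (map (fun k => a * f k + b * g k) l) = a * lsum (map f l) + b * lsum (map g l).
Proof. induction l; simpl; [ring | rewrite IHl; ring]. Qed.

Lemma lsum_const a l : lsum (map (fun _ : nat => a) l) = a * INR (length l).
Proof.
  induction l as [|x l IH]; [simpl; ring|].
  change (lsum (map (fun _ : nat => a) (x :: l))) with (a + lsum (map (fun _ : nat => a) l)).
  change (length (x :: l)) with (S (length l)). rewrite IH, S_INR. ring.
Qed.

Lemma NoDup_map_in (f : nat -> nat) l :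
  (forall x y, In x l -> In y l -> f x = f y -> x = y) -> NoDup l -> NoDup (map f l).
Proof.
  induction l as [|x l IH]; intros Hi Hn; simpl; constructor.
  - inversion Hn; subst. intro Hin. apply in_map_iff in Hin as [y [Hy Hyl]].
    assert (y = x) by (apply Hi; simpl; auto). subst; contradiction.
  - inversion Hn; subst. apply IH; auto. intros; apply Hi; simpl; auto.
Qed.

Lemma sin_diff A b : sin (A + b/2) - sin (A - b/2) = 2 * sin (b/2) * cos A.
Proof. rewrite sin_plus, sin_minus. ring. Qed.

Lemma tele a b m :
  2 * sin (b/2) * lsum (map (fun k => cos (a + INR k * b)) (seq 0 m))
  = sin (a + INR m * b - b/2) - sin (a - b/2).
Proof.
  induction m.
  - simpl. replace (a + 0 * b - b/2) with (a - b/2) by ring. ring.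
  - rewrite seq_S, map_app, lsum_app, Rmult_plus_distr_l, IHm. rewrite S_INR. simpl.
    replace (a + (INR m + 1) * b - b / 2) with ((a + INR m * b) + b/2) by field.
    replace (a + INR m * b - b / 2) with ((a + INR m * b) - b/2) by field.
    rewrite Rplus_0_r, <- (sin_diff (a + INR m * b) b). field.
Qed.

Lemma cos_sum0 a (j n : nat) : (0 < j)%nat -> (j < n)%nat ->
  lsum (map (fun k => cos (a + INR k * (2 * PI * INR j / INR n))) (seq 0 n)) = 0.
Proof.
  intros Hj Hjn.
  set (b := 2 * PI * INR j / INR n).
  assert (Hn : 0 < INR n) by (apply lt_0_INR; lia).
  assert (Hj' : 0 < INR j) by (apply lt_0_INR; lia).
  assert (Hjn' : INR j < INR n) by (apply lt_INR; lia).
  assert (Hs : 0 < sin (b/2)).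
  { apply sin_gt_0; unfold b.
    - assert (0 < PI * INR j / INR n) by (apply Rdiv_lt_0_compat; [apply Rmult_lt_0_compat; [apply PI_RGT_0|]|]; lra).
      replace (2 * PI * INR j / INR n / 2) with (PI * INR j / INR n) by (field; lra). lra.
    - replace (2 * PI * INR j / INR n / 2) with (PI * (INR j / INR n)) by (field; lra).
      assert (INR j / INR n < 1) by (apply (Rmult_lt_reg_r (INR n)); [lra|]; field_simplify; lra).
      pose proof PI_RGT_0. nra. }
  pose proof (tele a b n) as H.
  replace (a + INR n * b - b / 2) with ((a - b/2) + 2 * INR j * PI) in H
    by (unfold b; field; lra).
  rewrite sin_period in H.
  assert (2 * sin (b/2) <> 0) by lra.
  apply (Rmult_eq_reg_l (2 * sin (b/2))); [|lra]. rewrite H. ring.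
Qed.

Lemma cos3 x : cos x ^ 3 = (3 * cos x + cos (3 * x)) / 4.
Proof.
  replace (3 * x) with (2 * x + x) by ring.
  rewrite cos_plus, cos_2a_cos, sin_2a.
  pose proof (sin2 x) as Hs. unfold Rsqr in Hs.
  replace (2 * sin x * cos x * sin x) with (2 * cos x * (sin x * sin x)) by ring.
  rewrite Hs. field.
Qed.

Lemma sum_lin1 m : lsum (map INR (seq 1 m)) = INR m * (INR m + 1) / 2.
Proof.
  induction m; [simpl; field|].
  rewrite seq_S, map_app, lsum_app, IHm. simpl (1 + m)%nat. cbn [lsum map fold_right]. rewrite !S_INR. field.
Qed.

Lemma sum_cub1 m : lsum (map (fun i => INR i ^ 3) (seq 1 m)) = (INR m * (INR m + 1) / 2) ^ 2.
Proof.
  induction m; [simpl; field|].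
  rewrite seq_S, map_app, lsum_app, IHm. simpl (1 + m)%nat. cbn [lsum map fold_right]. rewrite !S_INR. field.
Qed.

Theorem mainTheorem2 :
  forall n : nat, (4 <= n)%nat ->
  exists (a b : R) (c : nat -> R),
    (a <> 0 \/ b <> 0) /\
    (forall i j : nat, (i < n)%nat -> (j < n)%nat -> c i = c j -> i = j) /\
    ~ (exists P : nat -> R * R,
         regular_polygon n P /\
         exists s : nat -> nat,
           (forall k, (k < n)%nat -> (s k < n)%nat) /\
           (forall i j, (i < n)%nat -> (j < n)%nat -> s i = s j -> i = j) /\
           (forall k, (k < n)%nat -> on_line a b (c (s k)) (P k))).
Proof.
  intros n Hn.
  destruct n as [|m]; [lia|].
  set (T := INR m * (INR m + 1) / 2).
  assert (Hm : 3 <= INR m) by (replace 3 with (INR 3) by (simpl; ring); apply le_INR; lia).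
  assert (HT : 6 <= T) by (unfold T; nra).
  set (c := fun i : nat => if Nat.eqb i 0 then - T else INR i).
  exists 1, 0, c. split; [left; lra|]. split.
  { intros i j Hi Hj Hc. unfold c in Hc.
    destruct (Nat.eqb_spec i 0), (Nat.eqb_spec j 0); try lia.
    - assert (0 < INR j) by (apply lt_0_INR; lia). lra.
    - assert (0 < INR i) by (apply lt_0_INR; lia). lra.
    - apply INR_eq; auto. }
  intros [P [[cx [cy [r [th [Hr HP]]]]] [s [Hs1 [Hs2 Hon]]]]].
  set (n := S m) in *.
  set (L := seq 0 n).
  assert (Hperm : Permutation (map s L) L).
  { apply NoDup_Permutation_bis.
    - apply NoDup_map_in; [|apply seq_NoDup].
      intros x y Hx Hy. apply in_seq in Hx, Hy. apply Hs2; lia.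
    - rewrite length_map; lia.
    - intros y Hy. apply in_map_iff in Hy as [x [<- Hx]]. apply in_seq in Hx.
      apply in_seq. specialize (Hs1 x). lia. }
  assert (Hre : forall g : nat -> R, lsum (map (fun k => g (s k)) L) = lsum (map g L)).
  { intro g. rewrite <- map_map. apply lsum_perm. apply Permutation_map. exact Hperm. }
  assert (Hnpos : 0 < INR n) by (apply lt_0_INR; unfold n; lia).
  set (u := fun k : nat => cos (th + INR k * (2 * PI * INR 1 / INR n))).
  set (v := fun k : nat => cos (3 * th + INR k * (2 * PI * INR 3 / INR n))).
  assert (Hu0 : lsum (map u L) = 0) by (apply cos_sum0; unfold n; lia).
  assert (Hv0 : lsum (map v L) = 0) by (apply cos_sum0; unfold n; lia).
  assert (Hpt : forall k, In k L -> c (s k) = cx + r * u k).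
  { intros k Hk. apply in_seq in Hk. specialize (Hon k ltac:(lia)).
    unfold on_line in Hon. rewrite HP in Hon by lia. cbn [fst snd] in Hon.
    unfold u. rewrite <- Hon.
    replace (th + INR k * (2 * PI * INR 1 / INR n)) with (th + 2 * PI * INR k / INR n)
      by (change (INR 1) with 1; field; lra). ring. }
  assert (Hc1 : lsum (map c L) = 0).
  { unfold L, n. simpl seq. simpl map. simpl lsum. fold (lsum (map c (seq 1 m))).
    rewrite (map_ext_in c INR).
    - rewrite sum_lin1. unfold c. simpl. fold T. ring.
    - intros i Hi. apply in_seq in Hi. unfold c. destruct (Nat.eqb_spec i 0); [lia|auto]. }
  assert (Hcx : cx = 0).
  { rewrite <- Hre in Hc1.
    rewrite (map_ext_in _ (fun k => cx * 1 + r * u k)) in Hc1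
      by (intros k Hk; rewrite Hpt; auto; ring).
    rewrite (lsum_lin (fun _ => 1) u) in Hc1. rewrite lsum_const, Hu0 in Hc1.
    unfold L in Hc1. rewrite length_seq in Hc1. nra. }
  assert (Hc3 : lsum (map (fun i => c i ^ 3) L) = T ^ 2 - T ^ 3).
  { unfold L, n. simpl seq. simpl map. simpl lsum. fold (lsum (map (fun i => c i ^ 3) (seq 1 m))).
    rewrite (map_ext_in (fun i => c i ^ 3) (fun i => INR i ^ 3)).
    - rewrite sum_cub1. unfold c. simpl. fold T. ring.
    - intros i Hi. apply in_seq in Hi. unfold c. destruct (Nat.eqb_spec i 0); [lia|auto]. }
  rewrite <- (Hre (fun i => c i ^ 3)) in Hc3.
  rewrite (map_ext_in _ (fun k => (3 * r ^ 3 / 4) * u k + (r ^ 3 / 4) * v k)) in Hc3.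
  2:{ intros k Hk. rewrite Hpt by auto. rewrite Hcx. unfold u, v.
      set (phi := th + INR k * (2 * PI * INR 1 / INR n)).
      replace (3 * th + INR k * (2 * PI * INR 3 / INR n)) with (3 * phi)
        by (unfold phi; replace (INR 3) with 3 by (simpl; ring); replace (INR 1) with 1 by (simpl; ring); field; lra).
      replace ((0 + r * cos phi) ^ 3) with (r ^ 3 * cos phi ^ 3) by ring.
      rewrite cos3. field. }
  rewrite lsum_lin, Hu0, Hv0 in Hc3. nra.
Qed.
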